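(* Let $N>1$ be an integer and $v=2^N$. For $1\le i\le N$ let $A_i\subseteq\mathbb{Z}_{2^N}$ be the set of residues $t\in\{0,\dots,2^N-1\}$ with $t \bmod 2^i\in\{0,1,\dots,2^{i-1}-1\}$ (i.e. the binary sequence of $A_i$ consists of a block of $2^{i-1}$ ones followed by $2^{i-1}$ zeros, repeated $2^{N-i}$ times). Then $\{A_1,\dots,A_N\}$ is a $(2^N,N,2^{N-1},2^{N-2})$-PSEDF in $\mathbb{Z}_{2^N}$. In particular, a $(2^N, N, 2^{N-1}, 2^{N-2})$-PSEDF exists in $\mathbb{Z}_{2^N}$.
   Context: Groups are written additively. For subsets $A,B$ of a group $G$, $\Delta(A,B)$ denotes the multiset $\{a-b: a\in A, b\in B\}$. For a group $G$ of order $v$ and $m>1$, a family of $k$-subsets $\{A_1,\dots,A_m\}$ of $G$ is a $(v,m,k,\lambda)$-PSEDF (pairwise strong external difference family) if for every pair $i\neq j$ the multiset $\Delta(A_i,A_j)$ contains every element of $G$ exactly $\lambda$ times (the sets need not be disjoint). *)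

(* Defs.v *)
From HB Require Import structures.
From mathcomp Require Import all_boot all_order all_algebra.
Set Implicit Arguments. Unset Strict Implicit. Unset Printing Implicit Defensive.
Import GRing.Theory.
Local Open Scope ring_scope.

(* Number of representations of g as a - b with a in A, b in B,
   i.e. the multiplicity of g in the multiset Delta(A,B). *)
Definition delta_mult (G : finZmodType) (A B : {set G}) (g : G) : nat :=
  #|[set p : G * G | [&& p.1 \in A, p.2 \in B & p.1 - p.2 == g]]|.

Definition PSEDF (G : finZmodType) (v m k lam : nat) (A : 'I_m -> {set G}) : Prop :=
  [/\ #|G| = v, (1 < m)%N,
      (forall i, #|A i| = k) &
      (forall i j : 'I_m, i != j -> forall g : G, delta_mult (A i) (A j) g = lam)].

Definition Aset (N i : nat) : {set 'Z_(2 ^ N)} :=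
  [set t : 'Z_(2 ^ N) | (nat_of_ord t %% 2 ^ i < 2 ^ i.-1)%N].

(* Main.v *)
Require Import Defs.
From mathcomp Require Import all_boot all_order all_algebra.
From mathcomp Require Import zify.
Set Implicit Arguments. Unset Strict Implicit. Unset Printing Implicit Defensive.
Import GRing.Theory.

Lemma split_half (G : finZmodType) (P Q : pred G) (s : G) :
  (forall x, P (x + s)%R = P x) -> (forall x, Q (x + s)%R = ~~ Q x) ->
  #|[pred x | P x && Q x]| * 2 = #|P|.
Proof.
move=> HP HQ.
have E2 : #|[predD P & Q]| = #|[pred x | P x && Q x]|.
  rewrite -(card_imset [pred x | P x && Q x] (addIr s)).
  apply: eq_card => y; rewrite !inE.
  apply/idP/imsetP.
    move=> /andP[Qy Py]; exists (y - s)%R; last by rewrite subrK.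
    rewrite inE /=; apply/andP; split; first by rewrite -HP subrK.
    by rewrite -[Q (y - s)%R]negbK -HQ subrK.
  move=> [x]; rewrite inE => /andP[Px Qx] ->.
  by change (~~ Q (x + s)%R && P (x + s)%R); rewrite HP HQ Qx Px.
have E1 : #|[predI P & Q]| = #|[pred x | P x && Q x]|.
  by apply: eq_card => y; rewrite !inE.
by rewrite -(cardID Q P) E1 E2 muln2 addnn.
Qed.

Lemma delta_eq (G : finZmodType) (A B : {set G}) (g : G) :
  delta_mult A B g = #|[pred b | (b \in B) && ((b + g)%R \in A)]|.
Proof.
rewrite /delta_mult.
have inj : injective (fun b : G => ((b + g)%R, b)) by move=> x y [].
rewrite -(card_imset [pred b | (b \in B) && ((b + g)%R \in A)] inj).
apply: eq_card => -[x y]; rewrite !inE /=.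
apply/idP/imsetP.
  move=> /and3P[xA yB /eqP e]; exists y; first by rewrite inE yB -e addrC subrK xA.
  by rewrite -e addrC subrK.
move=> [b]; rewrite inE => /andP[bB bA] [-> ->].
by rewrite bA bB addrAC subrr add0r eqxx.
Qed.

Lemma nat_flip i q t : (0 < i)%N -> (2 ^ i %| q)%N ->
  ((t + 2 ^ i.-1) %% q %% 2 ^ i < 2 ^ i.-1)%N = ~~ (t %% 2 ^ i < 2 ^ i.-1)%N.
Proof.
move=> i0 dq; rewrite (modn_dvdm _ dq) -modnDml.
have e : (2 ^ i = 2 ^ i.-1 * 2)%N by rewrite -expnSr prednK.
have lt := ltn_pmod t (expn_gt0 2 i).
move: lt; rewrite e.
move: (t %% _)%N => r.
move: (2 ^ i.-1)%N (expn_gt0 2 i.-1) => h h0 lt.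
case: (ltnP r h) => rh /=.
  rewrite (@modn_small (r + h)); last by lia.
  by apply/idP/idP; lia.
have -> : (r + h = (r - h) + h * 2)%N by lia.
rewrite modnDr (@modn_small (r - h)); last by lia.
by apply/idP/idP; lia.
Qed.

Lemma nat_keep i j q t : (i <= j)%N -> (2 ^ i %| q)%N ->
  ((t + 2 ^ j) %% q %% 2 ^ i < 2 ^ i.-1)%N = (t %% 2 ^ i < 2 ^ i.-1)%N.
Proof.
move=> ij dq; rewrite (modn_dvdm _ dq).
have -> : (2 ^ j = 2 ^ (j - i) * 2 ^ i)%N by rewrite -expnD subnK.
by rewrite addnC modnMDl.
Qed.

Section Z.
Variable N : nat.
Hypothesis hN : (1 < N)%N.
Local Notation q := (Zp_trunc (2 ^ N)).+2.

Lemma qE : q = (2 ^ N)%N.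
Proof. by rewrite Zp_cast // (ltn_exp2l 0) //; lia. Qed.

Definition sh (k : nat) : 'Z_(2 ^ N) := inZp (2 ^ k).

Lemma sh_val x k : nat_of_ord (x + sh k)%R = ((x + 2 ^ k) %% q)%N.
Proof. by rewrite /= modnDmr. Qed.

Lemma dvd_q i : (i <= N)%N -> (2 ^ i %| q)%N.
Proof. by move=> iN; rewrite qE dvdn_exp2l. Qed.

Lemma flipA k x : (k < N)%N ->
  ((x + sh k)%R \in Aset N k.+1) = (x \notin Aset N k.+1).
Proof.
move=> kN; rewrite !inE sh_val.
by rewrite -[in 2 ^ k]/(2 ^ k.+1.-1)%N nat_flip // dvd_q.
Qed.

Lemma keepA k i x : (i <= k)%N -> (k < N)%N ->
  ((x + sh k)%R \in Aset N i) = (x \in Aset N i).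
Proof.
move=> ik kN; rewrite !inE sh_val nat_keep //; apply: dvd_q; lia.
Qed.

End Z.

Lemma arith2 N X : (1 < N)%N -> (X * 2 * 2 = 2 ^ N)%N -> X = (2 ^ N.-2)%N.
Proof.
move=> hN e.
have e2 : (2 ^ N = 2 ^ N.-2 * 4)%N.
  by rewrite -(expnD 2 N.-2 2) (_ : N.-2 + 2 = N)%N //; lia.
by apply/eqP; rewrite -(eqn_pmul2r (_ : 0 < 4)%N) // -e2 -e -mulnA.
Qed.

Lemma arith1 N X : (1 < N)%N -> (X * 2 = 2 ^ N)%N -> X = (2 ^ N.-1)%N.
Proof.
move=> hN e.
have e2 : (2 ^ N = 2 ^ N.-1 * 2)%N by rewrite -expnSr prednK //; lia.
by apply/eqP; rewrite -(eqn_pmul2r (_ : 0 < 2)%N) // -e2 -e.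
Qed.


Theorem theorem3p5 (N : nat) (hN : (1 < N)%N) :
  PSEDF (2 ^ N) (2 ^ N.-1) (2 ^ N.-2) (fun i : 'I_N => Aset N i.+1) /\
  exists A : 'I_N -> {set 'Z_(2 ^ N)}, PSEDF (2 ^ N) (2 ^ N.-1) (2 ^ N.-2) A.
Proof.
have cardG : #|'Z_(2 ^ N)| = (2 ^ N)%N by rewrite card_ord qE.
have shiftcard : forall (k : nat) (g : 'Z_(2 ^ N)), (k < N)%N ->
    #|[pred b : 'Z_(2 ^ N) | (b + g)%R \in Aset N k.+1]| * 2 = (2 ^ N)%N.
  move=> k g kN; apply: (etrans _ cardG).
  have := @split_half _ predT (fun b : 'Z_(2 ^ N) => (b + g)%R \in Aset N k.+1) (sh N k) (fun _ => erefl).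
  move=> /(_ _) <-.
    by congr (_ * _)%N; apply: eq_card => b; rewrite !inE.
  by move=> x; rewrite addrAC (flipA hN).
have PS : PSEDF (2 ^ N) (2 ^ N.-1) (2 ^ N.-2) (fun i : 'I_N => Aset N i.+1).
  split => //.
    move=> i; apply: arith1 => //.
    apply: (etrans _ (shiftcard i 0%R (ltn_ord i))).
    by congr (_ * _)%N; apply: eq_card => b; rewrite !inE addr0.
  move=> i j ij g; rewrite delta_eq; apply: arith2 => //.
  case: (ltngtP i j) => [lt|gt|eq]; last by move/eqP: ij; case; apply: val_inj.
  - have E : #|[pred b : 'Z_(2 ^ N) | ((b + g)%R \in Aset N i.+1) && (b \in Aset N j.+1)]| * 2
             = #|[pred b : 'Z_(2 ^ N) | (b + g)%R \in Aset N i.+1]|.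
      apply: (@split_half _ (fun b : 'Z_(2 ^ N) => (b + g)%R \in Aset N i.+1)
              (fun b => b \in Aset N j.+1) (sh N j)).
        by move=> x; rewrite addrAC (keepA hN).
      by move=> x; rewrite (flipA hN).
    apply: (etrans _ (shiftcard i g (ltn_ord i))); rewrite -E.
    by congr (_ * _ * _)%N; apply: eq_card => b; rewrite !inE andbC.
  - have E : #|[pred b : 'Z_(2 ^ N) | (b \in Aset N j.+1) && ((b + g)%R \in Aset N i.+1)]| * 2
             = #|[pred b : 'Z_(2 ^ N) | b \in Aset N j.+1]|.
      apply: (@split_half _ (fun b : 'Z_(2 ^ N) => b \in Aset N j.+1)
              (fun b => (b + g)%R \in Aset N i.+1) (sh N i)).
        by move=> x; rewrite (keepA hN).
      by move=> x; rewrite addrAC (flipA hN).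
    have E2 : #|[pred b : 'Z_(2 ^ N) | b \in Aset N j.+1]| =
              #|[pred b : 'Z_(2 ^ N) | (b + 0)%R \in Aset N j.+1]|.
      by apply: eq_card => b; rewrite !inE addr0.
    apply: (etrans _ (shiftcard j 0%R (ltn_ord j))); rewrite -E2 -E.
    by congr (_ * _ * _)%N; apply: eq_card => b; rewrite !inE.
split=> //; by exists (fun i : 'I_N => Aset N i.+1).
Qed.
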